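(* Let $\mathcal{M}=(E,\rho)$ be a $q$-matroid, $E_1=\mathrm{cyc}(E)$, and $E_2\le E$ with $E_1\oplus E_2=E$. Let $\mathcal{M}_i=\mathcal{M}|_{E_i}$ for $i=1,2$. Then (a) $\mathcal{M}_2$ is the free $q$-matroid on $E_2$; (b) $\mathcal{Z}(\mathcal{M})=\mathcal{Z}(\mathcal{M}_1)$; (c) $\mathcal{M}=\mathcal{M}_1\oplus\mathcal{M}_2$.
   Context: Let $\mathbb{F}=\mathbb{F}_q$. A $q$-matroid is $\mathcal{M}=(E,\rho)$, $E$ a finite-dimensional $\mathbb{F}$-vector space, $\rho$ from subspaces to $\mathbb{Z}_{\ge0}$ with $0\le\rho(V)\le\dim V$, monotone and submodular. The restriction $\mathcal{M}|_X$ is $(X,\rho|_{\mathcal{L}(X)})$. Free $q$-matroid on $E_2$: $\rho(V)=\dim V$ for all $V\le E_2$. Flat: $\rho(F+\langle x\rangle)>\rho(F)$ for all $x\notin F$. Cyclic core: $\mathrm{cyc}(V)=\{x\in V\mid\rho(W)=\rho(V)\text{ for all }W\le V\text{ with }W+\langle x\rangle=V\}$; cyclic: $\mathrm{cyc}(V)=V$; $\mathcal{Z}(\mathcal{M})$: the set of cyclic flats. $\mathcal{M}=\mathcal{M}_1\oplus\mathcal{M}_2$ means $E=E_1\oplus E_2$ and $\rho(V)=\dim V+\min_{X\le V}(\rho_1(\pi_1(X))+\rho_2(\pi_2(X))-\dim X)$ for all $V$, where $\rho_i$ is the rank function of $\mathcal{M}_i$ and $\pi_i:E\to E_i$ the projections.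 *)

(* Defs.v *)
(* A q-matroid is modelled on a ground subspace X of an
   ambient finite-dimensional vector space L over a finite field F = F_q;
   the rank function is a map {vspace L} -> nat, only its values on
   subspaces of X matter. *)
From HB Require Import structures.
From mathcomp Require Import all_boot all_order all_algebra all_field.
Set Implicit Arguments. Unset Strict Implicit. Unset Printing Implicit Defensive.
Import Order.TTheory GRing.Theory Num.Theory.

Local Open Scope ring_scope.

Section QMatroid.
Variables (F : finFieldType) (L : vectType F).

Definition is_qmatroid (X : {vspace L}) (rho : {vspace L} -> nat) : Prop :=
  [/\ (forall V : {vspace L}, (V <= X)%VS -> (rho V <= \dim V)%N),
      (forall V W : {vspace L}, (V <= X)%VS -> (W <= X)%VS ->
          (V <= W)%VS -> (rho V <= rho W)%N) &
      (forall V W : {vspace L}, (V <= X)%VS -> (W <= X)%VS ->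
          (rho (V + W)%VS + rho (V :&: W)%VS <= rho V + rho W)%N)].

Definition in_cyc (rho : {vspace L} -> nat) (V : {vspace L}) (x : L) : Prop :=
  x \in V /\ forall W : {vspace L}, (W <= V)%VS -> (W + <[x]>)%VS = V -> rho W = rho V.

Definition cyclic (rho : {vspace L} -> nat) (V : {vspace L}) : Prop :=
  forall x, x \in V <-> in_cyc rho V x.

Definition flat (X : {vspace L}) (rho : {vspace L} -> nat) (V : {vspace L}) : Prop :=
  forall x, x \in X -> x \notin V -> (rho V < rho (V + <[x]>)%VS)%N.

Definition cyclic_flat (X : {vspace L}) (rho : {vspace L} -> nat) (V : {vspace L}) : Prop :=
  [/\ (V <= X)%VS, flat X rho V & cyclic rho V].

Definition free_qmatroid (X : {vspace L}) (rho : {vspace L} -> nat) : Prop :=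
  forall V : {vspace L}, (V <= X)%VS -> rho V = \dim V.

(* rho = rho1 (+) rho2 for E = E1 (+) E2 (E = fullv); pi_i = projections.
   The minimum in the formula is written out: it is attained and is a lower
   bound.  Computed in int. *)
Definition dsum_term (E1 E2 : {vspace L}) (rho1 rho2 : {vspace L} -> nat)
  (X : {vspace L}) : int :=
  (rho1 (daddv_pi E1 E2 @: X)%VS)%:Z + (rho2 (daddv_pi E2 E1 @: X)%VS)%:Z
  - (\dim X)%:Z.

Definition is_direct_sum (E1 E2 : {vspace L}) (rho rho1 rho2 : {vspace L} -> nat)
  : Prop :=
  forall V : {vspace L},
    (forall X : {vspace L}, (X <= V)%VS ->
       (rho V)%:Z <= (\dim V)%:Z + dsum_term E1 E2 rho1 rho2 X) /\
    (exists2 X : {vspace L}, (X <= V)%VS &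
       (rho V)%:Z = (\dim V)%:Z + dsum_term E1 E2 rho1 rho2 X).

End QMatroid.

(* Main.v *)
Require Import Defs.
From HB Require Import structures.
From mathcomp Require Import all_boot all_order all_algebra all_field.
From mathcomp Require Import zify.
From Stdlib Require Import Classical.
Import Order.TTheory GRing.Theory Num.Theory.
Local Open Scope ring_scope.
Set Implicit Arguments. Unset Strict Implicit.

Lemma qm_rho0 (F : finFieldType) (L : vectType F) (rho : {vspace L} -> nat) :
  is_qmatroid fullv rho -> rho 0%VS = 0%N.
Proof.
case=> H1 _ _; have := H1 0%VS (subvf _); rewrite dimv0; lia.
Qed.

Lemma qm_subadd (F : finFieldType) (L : vectType F) (rho : {vspace L} -> nat) U W :
  is_qmatroid fullv rho -> (rho (U + W)%VS <= rho U + rho W)%N.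
Proof.
case=> _ _ H3; have := H3 U W (subvf _) (subvf _); lia.
Qed.

Lemma qm_mono (F : finFieldType) (L : vectType F) (rho : {vspace L} -> nat) U W :
  is_qmatroid fullv rho -> (U <= W)%VS -> (rho U <= rho W)%N.
Proof. by case=> _ H2 _ UW; apply: H2 => //; apply: subvf. Qed.

Lemma qm_dim (F : finFieldType) (L : vectType F) (rho : {vspace L} -> nat) U :
  is_qmatroid fullv rho -> (rho U <= \dim U)%N.
Proof. by case=> H1 _ _; apply: H1; apply: subvf. Qed.

Lemma qm_incr (F : finFieldType) (L : vectType F) (rho : {vspace L} -> nat) A B :
  is_qmatroid fullv rho -> (B <= A)%VS ->
  (rho A + \dim B <= rho B + \dim A)%N.
Proof.
move=> Hq BA.
have E : (A :\: B + B)%VS = A by rewrite -{2}(addv_diff_cap A B) (capv_idPr BA).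
have := @qm_subadd _ _ rho (A :\: B)%VS B Hq; rewrite E.
have := @qm_dim _ _ rho (A :\: B)%VS Hq.
have := dimv_cap_compl A B; rewrite (capv_idPr BA); lia.
Qed.

Lemma line_up (F : finFieldType) (L : vectType F) (U : {vspace L}) (y : L) :
  y \notin U -> (\dim U < \dim (U + <[y]>))%N.
Proof.
move=> yU; have [le eq] := dimv_leqif_eq (addvSl U <[y]>).
rewrite ltn_neqAle le andbT eq; apply/negP => /eqP E.
by move: yU; rewrite E (subvP (addvSr U <[y]>)) // memv_line.
Qed.

Lemma dim_line_le1 (F : finFieldType) (L : vectType F) (y : L) :
  (\dim <[y]> <= 1)%N.
Proof. by rewrite dim_vline; case: (y != 0). Qed.

Lemma hyper_full (F : finFieldType) (L : vectType F) (W : {vspace L}) (y : L) :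
  (\dim (fullv : {vspace L}) <= (\dim W).+1)%N -> y \notin W -> (W + <[y]>)%VS = fullv.
Proof.
move=> hd yW; apply/eqP; rewrite eqEdim subvf /=.
have := line_up yW; lia.
Qed.

Lemma hyper_dim (F : finFieldType) (L : vectType F) (W : {vspace L}) (y : L) :
  (W + <[y]>)%VS = fullv -> (\dim (fullv : {vspace L}) <= (\dim W).+1)%N.
Proof.
move=> E; have := dimv_sum_cap W <[y]>; rewrite E.
have := dim_line_le1 y; lia.
Qed.

Lemma K_ind (F : finFieldType) (L : vectType F) (rho : {vspace L} -> nat) (E1 : {vspace L}) :
  is_qmatroid fullv rho ->
  (forall x : L, x \in E1 <-> in_cyc rho fullv x) ->
  forall n (A : {vspace L}), (E1 <= A)%VS -> (\dim A <= \dim E1 + n)%N ->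
  (rho A + \dim (fullv : {vspace L}) <= rho fullv + \dim A)%N ->
  (rho E1 + \dim (fullv : {vspace L}) <= rho fullv + \dim E1)%N.
Proof.
move=> Hq Hc; elim=> [|n IH] A E1A hdA hrA.
  have : E1 == A by rewrite eqEdim E1A /=; move: hdA; rewrite addn0.
  by move/eqP=> ->.
case: (boolP (A <= E1)%VS) => AE1.
  by have -> : E1 = A by apply: subv_anti; rewrite E1A AE1.
case/subvPn: AE1 => x xA xE1.
have [W [_ HW Hr]] : exists W : {vspace L}, [/\ (W <= fullv)%VS, (W + <[x]>)%VS = fullv &
    rho W <> rho fullv].
  apply: NNPP => hn; apply: (negP xE1); apply/Hc; split; first exact: memvf.
  move=> W Wf HW; apply: NNPP => hne; apply: hn; by exists W.
have hdW := hyper_dim HW.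
have xW : x \notin W.
  apply/negP => xW; apply: Hr; congr rho; rewrite -HW; apply/esym/addv_idPl.
  by rewrite -memvE.
have E1W : (E1 <= W)%VS.
  apply/subvP => y yE1; apply/negPn/negP => yW.
  have [_ Hy] := (Hc y).1 yE1.
  by apply: Hr; apply: Hy; [apply: subvf | apply: hyper_full].
have AW : (A + W)%VS = fullv.
  apply/eqP; rewrite eqEdim subvf /=; rewrite -{1}HW; apply: dimvS.
  by rewrite addvC; apply: addvS => //; rewrite -memvE.
have hrW : (rho W < rho fullv)%N.
  have := qm_mono Hq (subvf W); have := Hr; lia.
have hsub := (let: And3 _ _ H3 := Hq in H3) A W (subvf _) (subvf _).
rewrite AW in hsub.
have hsc := dimv_sum_cap A W; rewrite AW in hsc.
have [le eq] := dimv_leqif_eq (capvSl A W).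
have neq : (A :&: W)%VS != A.
  apply/negP => /eqP E; move: xW; rewrite -E in xA.
  by rewrite (subvP (capvSr A W)).
rewrite -eq in neq.
apply: (IH (A :&: W)%VS).
- by rewrite subv_cap E1A E1W.
- have : (\dim (A :&: W) != \dim A)%N by apply: contra neq => /eqP ->.
  lia.
- lia.
Qed.

Lemma K_main (F : finFieldType) (L : vectType F) (rho : {vspace L} -> nat) (E1 : {vspace L}) :
  is_qmatroid fullv rho ->
  (forall x : L, x \in E1 <-> in_cyc rho fullv x) ->
  (rho E1 + \dim (fullv : {vspace L}) <= rho fullv + \dim E1)%N.
Proof.
move=> Hq Hc; apply: (K_ind Hq Hc (n := \dim (fullv : {vspace L})) (A := fullv)).
- exact: subvf.
- lia.
- lia.
Qed.

Lemma star (F : finFieldType) (L : vectType F) (rho : {vspace L} -> nat) (E1 : {vspace L}) :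
  is_qmatroid fullv rho ->
  (forall x : L, x \in E1 <-> in_cyc rho fullv x) ->
  forall V : {vspace L},
  (rho (E1 :&: V)%VS + \dim V <= rho V + \dim (E1 :&: V))%N.
Proof.
move=> Hq Hc V.
have hK := K_main Hq Hc.
have hsub := (let: And3 _ _ H3 := Hq in H3) E1 V (subvf _) (subvf _).
have h2 := @qm_incr _ _ rho fullv (E1 + V)%VS Hq (subvf _).
have h3 := dimv_sum_cap E1 V.
have h4 := dimvS (subvf (E1 + V)%VS).
lia.
Qed.

Theorem proposition7p5 (F : finFieldType) (L : vectType F)
  (rho : {vspace L} -> nat) (E1 E2 : {vspace L}) :
  is_qmatroid fullv rho ->
  (forall x : L, x \in E1 <-> in_cyc rho fullv x) ->
  directv (E1 + E2) -> (E1 + E2)%VS = fullv ->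
  [/\ free_qmatroid E2 rho,
      (forall V : {vspace L}, cyclic_flat fullv rho V <-> cyclic_flat E1 rho V) &
      is_direct_sum E1 E2 rho rho rho].
Proof.
move=> Hq Hc /directv_addP Hd HE.
have Hs := star Hq Hc.
have H0 := qm_rho0 Hq.
split.
- move=> V VE2.
  have Z : (E1 :&: V)%VS = 0%VS.
    by apply/eqP; rewrite -subv0 -Hd; apply: capvS.
  have := Hs V; rewrite Z H0 dimv0.
  have := @qm_dim _ _ rho V Hq; lia.
- move=> V; split.
  + case=> _ Hfl Hcy; split; last exact: Hcy.
    * apply/subvP => x xV; apply/Hc; split; first exact: memvf.
      move=> W _ HW.
      case: (boolP (x \in W)) => xW.
        by congr rho; rewrite -HW; apply/esym/addv_idPl; rewrite -memvE.
      have hdW := hyper_dim HW.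
      have [_ Hx] := (Hcy x).1 xV.
      have E : ((W :&: V) + <[x]>)%VS = V.
        apply/eqP; rewrite eqEdim subv_add capvSr -memvE xV /=.
        have xWV : x \notin (W :&: V)%VS by rewrite memv_cap (negbTE xW).
        have := line_up xWV.
        have := dimv_sum_cap W V.
        have := dimvS (subvf (W + V)%VS).
        lia.
      have hr := Hx _ (capvSr W V) E.
      have hsub := (let: And3 _ _ H3 := Hq in H3) W V (subvf _) (subvf _).
      have hm : (rho fullv <= rho (W + V)%VS)%N.
        apply: (qm_mono Hq); rewrite -HW; apply: addvS => //; by rewrite -memvE.
      have := qm_mono Hq (subvf W).
      lia.
    * by move=> x _ xV; apply: Hfl => //; apply: memvf.
  + case=> VE1 Hfl Hcy; split => //; first exact: subvf.
    move=> x _ xV.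
    case: (boolP (x \in E1)) => xE1; first exact: Hfl.
    set C := (E1 :&: (V + <[x]>))%VS.
    have VC : (V <= C)%VS by rewrite subv_cap VE1 addvSl.
    have h1 := dimv_sum_cap E1 (V + <[x]>)%VS.
    have h2 := dimv_sum_cap V <[x]>.
    have h3 := dim_line_le1 x.
    have h4 := line_up xE1.
    have h5 : (\dim (E1 + <[x]>) <= \dim (E1 + (V + <[x]>)))%N.
      by apply: dimvS; apply: addvS => //; apply: addvSr.
    have CV : C = V.
      apply/eqP; rewrite eq_sym eqEdim VC /=.
      rewrite /C; lia.
    have := Hs (V + <[x]>)%VS; rewrite -/C CV.
    have := line_up xV.
    lia.
- move=> V; split.
  + move=> X XV; rewrite /dsum_term.
    have h1 := @qm_incr _ _ rho V X Hq XV.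
    have h2 := dimvS XV.
    have h3 : (X <= daddv_pi E1 E2 @: X + daddv_pi E2 E1 @: X)%VS.
      apply/subvP => x xX.
      rewrite -(daddv_pi_add Hd (w := x)); last by rewrite HE memvf.
      by apply: memv_add; apply: memv_img.
    have h4 := qm_mono Hq h3.
    have h5 := @qm_subadd _ _ rho (daddv_pi E1 E2 @: X)%VS (daddv_pi E2 E1 @: X)%VS Hq.
    lia.
  + exists (E1 :&: V)%VS; first exact: capvSr.
    rewrite /dsum_term.
    set X := (E1 :&: V)%VS.
    have XE1 : (X <= E1)%VS by apply: capvSl.
    have h1 : (daddv_pi E1 E2 @: X <= X)%VS.
      apply/subvP => w /memv_imgP [v vX ->].
      by rewrite daddv_pi_id // (subvP XE1).
    have h2 : (daddv_pi E2 E1 @: X)%VS = 0%VS.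
      apply/eqP; rewrite -subv0; apply/subvP => w /memv_imgP [v vX ->].
      have vE1 := subvP XE1 v vX.
      have := daddv_pi_add Hd (w := v); rewrite HE memvf daddv_pi_id // => /(_ isT) E.
      by rewrite memv0; apply/eqP; apply: (addrI v); rewrite addr0.
    have h3 := qm_mono Hq h1.
    have h4 := Hs V.
    have h5 := dimvS (capvSr E1 V).
    have h6 := @qm_incr _ _ rho V X Hq (capvSr E1 V).
    have h7 := dimvS h1.
    rewrite h2 H0.
    have h9 : (X <= daddv_pi E1 E2 @: X)%VS.
      apply/subvP => v vX; rewrite -(daddv_pi_id Hd (subvP XE1 v vX)).
      exact: memv_img.
    have h10 := qm_mono Hq h9.
    rewrite /X in h1 h3 h6 h7 h10 *.
    move: h3 h4 h5 h6 h10; clear.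
    move: (rho V) (\dim V) (rho (E1 :&: V)%VS) (\dim (E1 :&: V)) (rho (daddv_pi E1 E2 @: (E1 :&: V))%VS).
    move=> a b c d e; lia.
Qed.
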